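(* An algebraic quantum hypergroup $(A,\Delta)$ is both of compact type and of discrete type if and only if $A$ is finite-dimensional.
   Context: **Standing definitions.** All algebras are over $\mathbb C$, associative, possibly without identity, with non-degenerate product. $M(A)$ denotes the multiplier algebra and $\iota$ the identity map. *Comultiplication.* A regular comultiplication is a linear map $\Delta:A\to M(A\otimes A)$, not assumed multiplicative, such that: - $\Delta(a)(1\otimes b)$, $(a\otimes1)\Delta(b)$, $\Delta(a)(b\otimes1)$ and $(1\otimes a)\Delta(b)$ lie in $A\otimes A$; - $(a\otimes1\otimes1)(\Delta\otimes\iota)(\Delta(b)(1\otimes c))=(\iota\otimes\Delta)((a\otimes1)\Delta(b))(1\otimes1\otimes c)$. *Counit.* A counit is a homomorphism $\varepsilon$ with $(\varepsilon\otimes\iota)\Delta=\iota=(\iota\otimes\varepsilon)\Delta$. *Integrals.* A left integral is a nonzero $\varphi$ with $(\iota\otimes\varphi)\Delta(a)=\varphi(a)1$ in $M(A)$. A functional is faithful if $f(ab)=0\ \forall b$ or $f(ba)=0\ \forall b$ forces $a=0$. *Antipode.* An antipode relative to a faithful left integral $\varphi$ is a bijective linear anti-homomorphism $S$ with $S((\iota\otimes\varphi)(\Delta(a)(1\otimes b)))=(\iota\otimes\varphi)((1\otimes a)\Delta(b))$. *Algebraic quantum hypergroup.* A pair $(A,\Delta)$ with a regular comultiplication admitting a counit $\varepsilon$, a faithful left integral $\varphi$ and an antipode $S$ relative to $\varphi$. **Types.** - $(A,\Delta)$ is of *compact type* if $A$ has an identity. - A *left co-integral* is a nonzero $h\in A$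 with $ah=\varepsilon(a)h$ for all $a\in A$. - $(A,\Delta)$ is of *discrete type* if a left co-integral exists. *)

(* Defs.v *)
From HB Require Import structures.
From mathcomp Require Import all_boot all_order all_algebra.
From mathcomp Require Import reals complex.
Set Implicit Arguments. Unset Strict Implicit. Unset Printing Implicit Defensive.
Import Order.TTheory GRing.Theory Num.Theory.
Local Open Scope ring_scope.

Section AQH.
Variables (K : fieldType) (A : lmodType K) (mul : A -> A -> A).

Definition is_nalg : Prop :=
  [/\ associative mul,
      (forall k a b c, mul (k *: a + b) c = k *: mul a c + mul b c),
      (forall k a b c, mul a (k *: b + c) = k *: mul a b + mul a c),
      (forall a, (forall b, mul a b = 0) -> a = 0) &
      (forall a, (forall b, mul b a = 0) -> a = 0)].

Definition lfun (f : A -> K) : Prop :=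
  forall c x y, f (c *: x + y) = c * f x + f y.

(* Tensors: an element of A (x) A is represented by a finite list of
   pairs (a_i,b_i) standing for sum_i a_i (x) b_i; two lists represent
   the same tensor iff they agree against all f (x) g, f, g linear
   functionals (algebraic duals separate points of tensor products). *)
Definition tens2 := seq (A * A).
Definition tens3 := seq (A * A * A).

Definition ev2 (f g : A -> K) (s : tens2) : K :=
  \sum_(p <- s) f p.1 * g p.2.
Definition ev3 (f g h : A -> K) (s : tens3) : K :=
  \sum_(p <- s) f p.1.1 * g p.1.2 * h p.2.

Definition teq2 (s t : tens2) : Prop :=
  forall f g, lfun f -> lfun g -> ev2 f g s = ev2 f g t.
Definition teq3 (s t : tens3) : Prop :=
  forall f g h, lfun f -> lfun g -> lfun h -> ev3 f g h s = ev3 f g h t.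

Definition tscale2 (c : K) (s : tens2) : tens2 := [seq (c *: p.1, p.2) | p <- s].
Definition tscale3 (c : K) (s : tens3) : tens3 :=
  [seq (c *: p.1.1, p.1.2, p.2) | p <- s].

Definition tmul2 (s t : tens2) : tens2 :=
  [seq (mul p.1 q.1, mul p.2 q.2) | p <- s, q <- t].

(* Multipliers of a (tensor) algebra: pairs (lambda, rho) of maps,
   m x := lambda x,  x m := rho x. *)
Definition mult (T : Type) := ((T -> T) * (T -> T))%type.
Definition mmul (T : Type) (m n : mult T) : mult T :=
  (fun x => m.1 (n.1 x), fun x => n.2 (m.2 x)).
Definition meq (T : Type) (eqT : T -> T -> Prop) (m n : mult T) : Prop :=
  forall x, eqT (m.1 x) (n.1 x) /\ eqT (m.2 x) (n.2 x).
Definition meq2 := @meq tens2 teq2.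
Definition meq3 := @meq tens3 teq3.

Definition emb2 (t : tens2) : mult tens2 := (fun s => tmul2 t s, fun s => tmul2 s t).
(* a (x) 1 and 1 (x) a in M(A (x) A) *)
Definition l2 (a : A) : mult tens2 :=
  (fun s => [seq (mul a p.1, p.2) | p <- s], fun s => [seq (mul p.1 a, p.2) | p <- s]).
Definition r2 (a : A) : mult tens2 :=
  (fun s => [seq (p.1, mul a p.2) | p <- s], fun s => [seq (p.1, mul p.2 a) | p <- s]).
(* a (x) 1 (x) 1 and 1 (x) 1 (x) a in M(A (x) A (x) A) *)
Definition l3 (a : A) : mult tens3 :=
  (fun s => [seq (mul a p.1.1, p.1.2, p.2) | p <- s],
   fun s => [seq (mul p.1.1 a, p.1.2, p.2) | p <- s]).
Definition r3 (a : A) : mult tens3 :=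
  (fun s => [seq (p.1.1, p.1.2, mul a p.2) | p <- s],
   fun s => [seq (p.1.1, p.1.2, mul p.2 a) | p <- s]).

Definition is_mult2 (m : mult tens2) : Prop :=
  [/\ (forall s s', teq2 s s' -> teq2 (m.1 s) (m.1 s') /\ teq2 (m.2 s) (m.2 s')),
      (forall c s t, teq2 (m.1 (tscale2 c s ++ t)) (tscale2 c (m.1 s) ++ m.1 t)),
      (forall c s t, teq2 (m.2 (tscale2 c s ++ t)) (tscale2 c (m.2 s) ++ m.2 t)) &
      (forall x y, teq2 (tmul2 x (m.1 y)) (tmul2 (m.2 x) y))].

Definition in_tens2 (m : mult tens2) : Prop := exists t, meq2 m (emb2 t).

Section Comult.
Variable D : A -> mult tens2.

(* (Delta (x) iota)(t) and (iota (x) Delta)(t) in M(A (x) A (x) A), t in A (x) A *)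
Definition DeltaI (t : tens2) : mult tens3 :=
  (fun z => flatten [seq [seq (u.1, u.2, mul p.2 q.2) | u <- (D p.1).1 [:: (q.1.1, q.1.2)]]
                    | p <- t, q <- z],
   fun z => flatten [seq [seq (u.1, u.2, mul q.2 p.2) | u <- (D p.1).2 [:: (q.1.1, q.1.2)]]
                    | p <- t, q <- z]).
Definition IDelta (t : tens2) : mult tens3 :=
  (fun z => flatten [seq [seq (mul p.1 q.1.1, u.1, u.2) | u <- (D p.2).1 [:: (q.1.2, q.2)]]
                    | p <- t, q <- z],
   fun z => flatten [seq [seq (mul q.1.1 p.1, u.1, u.2) | u <- (D p.2).2 [:: (q.1.2, q.2)]]
                    | p <- t, q <- z]).

Definition regular_comult : Prop :=
  [/\ (forall a, is_mult2 (D a)),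
      (forall c a b, meq2 (D (c *: a + b))
          (fun s => tscale2 c ((D a).1 s) ++ (D b).1 s,
           fun s => tscale2 c ((D a).2 s) ++ (D b).2 s)),
      (forall a b, [/\ in_tens2 (mmul (D a) (r2 b)), in_tens2 (mmul (l2 a) (D b)),
                       in_tens2 (mmul (D a) (l2 b)) & in_tens2 (mmul (r2 a) (D b))]) &
      (* coassociativity:
         (a(x)1(x)1)(Delta(x)iota)(Delta(b)(1(x)c))
           = (iota(x)Delta)((a(x)1)Delta(b))(1(x)1(x)c) *)
      (forall a b c t u, meq2 (mmul (D b) (r2 c)) (emb2 t) ->
          meq2 (mmul (l2 a) (D b)) (emb2 u) ->
          meq3 (mmul (l3 a) (DeltaI t)) (mmul (IDelta u) (r3 c)))].

Definition sliceL (f : A -> K) (t : tens2) : A := \sum_(p <- t) f p.1 *: p.2.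
Definition sliceR (f : A -> K) (t : tens2) : A := \sum_(p <- t) f p.2 *: p.1.

(* counit: homomorphism eps with (eps(x)iota)Delta = iota = (iota(x)eps)Delta,
   as multipliers of A *)
Definition counit (eps : A -> K) : Prop :=
  [/\ lfun eps /\ (forall a b, eps (mul a b) = eps a * eps b),
      (forall a b t, meq2 (mmul (D a) (r2 b)) (emb2 t) -> sliceL eps t = mul a b),
      (forall a b t, meq2 (mmul (r2 b) (D a)) (emb2 t) -> sliceL eps t = mul b a),
      (forall a b t, meq2 (mmul (D a) (l2 b)) (emb2 t) -> sliceR eps t = mul a b) &
      (forall a b t, meq2 (mmul (l2 b) (D a)) (emb2 t) -> sliceR eps t = mul b a)].

(* left integral: nonzero functional with (iota(x)phi)Delta(a) = phi(a)1 in M(A) *)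
Definition left_integral (phi : A -> K) : Prop :=
  [/\ lfun phi, (exists a, phi a != 0),
      (forall a b t, meq2 (mmul (D a) (l2 b)) (emb2 t) -> sliceR phi t = phi a *: b) &
      (forall a b t, meq2 (mmul (l2 b) (D a)) (emb2 t) -> sliceR phi t = phi a *: b)].

Definition faithful (phi : A -> K) : Prop :=
  forall a, ((forall b, phi (mul a b) = 0) \/ (forall b, phi (mul b a) = 0)) -> a = 0.

Definition antipode (phi : A -> K) (S : A -> A) : Prop :=
  [/\ bijective S, (forall c a b, S (c *: a + b) = c *: S a + S b),
      (forall a b, S (mul a b) = mul (S b) (S a)) &
      (forall a b t u, meq2 (mmul (D a) (r2 b)) (emb2 t) ->
          meq2 (mmul (r2 a) (D b)) (emb2 u) ->
          S (sliceR phi t) = sliceR phi u)].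

Definition AQH (eps : A -> K) : Prop :=
  [/\ is_nalg, regular_comult, counit eps &
      exists phi S, [/\ left_integral phi, faithful phi & antipode phi S]].

Definition compact_type : Prop := exists e, forall a, mul e a = a /\ mul a e = a.

Definition left_cointegral (eps : A -> K) (h : A) : Prop :=
  h != 0 /\ forall a, mul a h = eps a *: h.

Definition discrete_type (eps : A -> K) : Prop := exists h, left_cointegral eps h.

End Comult.

Definition finite_dim : Prop :=
  exists s : seq A, forall a, exists c : nat -> K, a = \sum_(i < size s) c i *: s`_i.

End AQH.

(* Main.v *)
Require Import Defs.
From HB Require Import structures.
From mathcomp Require Import all_boot all_order all_algebra.
From mathcomp Require Import reals complex.
Import GRing.Theory Num.Theory.
Local Open Scope ring_scope.

Section Helpers.
Variables (K : fieldType) (A : lmodType K).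

Lemma lfun0 (f : A -> K) : lfun f -> f 0 = 0.
Proof.
move=> Hf; have := Hf 1 0 0; rewrite scaler0 addr0 mul1r.
by move/(congr1 (fun x => x - f 0)); rewrite addrK subrr.
Qed.

Lemma lfunD (f : A -> K) x y : lfun f -> f (x + y) = f x + f y.
Proof. by move=> Hf; rewrite -[x in LHS]scale1r Hf mul1r. Qed.

Lemma lfunZ (f : A -> K) c x : lfun f -> f (c *: x) = c * f x.
Proof. by move=> Hf; rewrite -[c *: x]addr0 Hf lfun0 // addr0. Qed.

Lemma lfunB (f : A -> K) x y : lfun f -> f (x - y) = f x - f y.
Proof.
move=> Hf; rewrite addrC -scaleN1r Hf mulN1r addrC //.
Qed.

Lemma lfun_sum (f : A -> K) n (c : nat -> K) (v : nat -> A) : lfun f ->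
  f (\sum_(i < n) c i *: v i) = \sum_(i < n) c i * f (v i).
Proof.
move=> Hf; elim: n => [|n IH]; first by rewrite !big_ord0 lfun0.
by rewrite !big_ord_recr /= addrC Hf IH addrC.
Qed.

Lemma lfun_sumo (f : A -> K) n (c : 'I_n -> K) (v : 'I_n -> A) : lfun f ->
  f (\sum_(i < n) c i *: v i) = \sum_(i < n) c i * f (v i).
Proof.
move=> Hf; elim/big_rec2: _ => [|i y1 y2 _ <-]; first by rewrite lfun0.
by rewrite Hf.
Qed.

Lemma repr (s : seq A)
  (Hs : forall a, exists c : nat -> K, a = \sum_(i < size s) c i *: s`_i)
  (B : A -> A -> K) (B1 : forall y, lfun (fun x => B x y)) (B2 : forall x, lfun (B x))
  (Bnd : forall a, (forall b, B a b = 0) -> a = 0) (w : A -> K) (Hw : lfun w) :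
  exists x, forall y, B y x = w y.
Proof.
pose n := size s.
pose N : 'M[K]_n := \matrix_(i, j) B s`_j s`_i.
pose r : 'rV[K]_n := \row_j w s`_j.
have Hsub : (r <= N)%MS.
  rewrite submxE; move: (mulmx_coker N); move: (cokermx N) => d Hd0.
  apply/eqP/matrixP => i0 k; rewrite !mxE /r.
  pose ak := \sum_(j < n) d j k *: s`_j.
  have HNd : forall i : 'I_n, B ak s`_i = 0.
    move=> i.
    have := congr1 (fun M : 'M[K]_n => M i k) Hd0; rewrite !mxE => <-.
    rewrite /ak (lfun_sumo (fun x => B x s`_i) _ _ _ (B1 _)).
    by apply: eq_bigr => j _; rewrite /N mxE mulrC.
  have ak0 : ak = 0.
    apply: Bnd => b; have [c ->] := Hs b.
    rewrite (lfun_sum _ _ _ _ (B2 _)) big1 // => i _.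
    by rewrite (HNd i) mulr0.
  have := lfun_sumo w n (fun j => d j k) (fun j => s`_j) Hw.
  rewrite -/ak ak0 lfun0 // => H0; rewrite [RHS]H0.
  by apply: eq_bigr => j _; rewrite mxE mulrC.
have [D' HD] := submxP Hsub.
exists (\sum_(i < n) D' 0 i *: s`_i) => y.
have Hj : forall j : 'I_n, B s`_j (\sum_(i < n) D' 0 i *: s`_i) = w s`_j.
  move=> j; have := congr1 (fun M : 'rV[K]_n => M 0 j) HD; rewrite /r /N !mxE => ->.
  rewrite (lfun_sumo _ _ _ _ (B2 _)).
  by apply: eq_bigr => i _; rewrite mxE.
have [c ->] := Hs y.
rewrite (lfun_sum _ _ _ _ (B1 _)) (lfun_sum _ _ _ _ Hw).
by apply: eq_bigr => j _; rewrite (Hj j).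
Qed.


Lemma teq2_trans (s t u : tens2 A) : teq2 s t -> teq2 t u -> teq2 s u.
Proof. by move=> H1 H2 f g Hf Hg; rewrite H1 // H2. Qed.

Lemma teq2_sym (s t : tens2 A) : teq2 s t -> teq2 t s.
Proof. by move=> H1 f g Hf Hg; rewrite H1. Qed.

Variable mul : A -> A -> A.
Hypothesis massoc : associative mul.
Hypothesis mL : forall k a b c, mul (k *: a + b) c = k *: mul a c + mul b c.
Hypothesis mR : forall k a b c, mul a (k *: b + c) = k *: mul a b + mul a c.

Lemma mul0l c : mul 0 c = 0.
Proof.
have := mL 1 0 0 c; rewrite scaler0 addr0 scale1r.
by move/(congr1 (fun x => x - mul 0 c)); rewrite addrK subrr.
Qed.
Lemma mul0r c : mul c 0 = 0.
Proof.
have := mR 1 c 0 0; rewrite scaler0 addr0 scale1r.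
by move/(congr1 (fun x => x - mul c 0)); rewrite addrK subrr.
Qed.
Lemma mulZl k a c : mul (k *: a) c = k *: mul a c.
Proof. by rewrite -[k *: a]addr0 mL mul0l addr0. Qed.
Lemma mulZr k a c : mul c (k *: a) = k *: mul c a.
Proof. by rewrite -[k *: a]addr0 mR mul0r addr0. Qed.
Lemma mulBl a b c : mul (a - b) c = mul a c - mul b c.
Proof. by rewrite addrC -scaleN1r mL scaleN1r addrC. Qed.
Lemma mulBr a b c : mul c (a - b) = mul c a - mul c b.
Proof. by rewrite addrC -scaleN1r mR scaleN1r addrC. Qed.

Lemma lfun_mull (g : A -> K) a : lfun g -> lfun (fun x => g (mul a x)).
Proof. by move=> Hg c x y; rewrite mR Hg. Qed.
Lemma lfun_mulr (g : A -> K) a : lfun g -> lfun (fun x => g (mul x a)).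
Proof. by move=> Hg c x y; rewrite mL Hg. Qed.

Lemma r2_teq1 a (s s' : tens2 A) : teq2 s s' -> teq2 ((r2 mul a).1 s) ((r2 mul a).1 s').
Proof.
move=> H f g Hf Hg; rewrite /ev2 /= !big_map.
by have := H f (fun x => g (mul a x)) Hf (lfun_mull g a Hg); rewrite /ev2.
Qed.
Lemma r2_teq2 a (s s' : tens2 A) : teq2 s s' -> teq2 ((r2 mul a).2 s) ((r2 mul a).2 s').
Proof.
move=> H f g Hf Hg; rewrite /ev2 /= !big_map.
by have := H f (fun x => g (mul x a)) Hf (lfun_mulr g a Hg); rewrite /ev2.
Qed.

Lemma tmul2_r1 a (t x : tens2 A) :
  (r2 mul a).1 (tmul2 mul t x) = tmul2 mul [seq (p.1, mul a p.2) | p <- t] x.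
Proof.
elim: t => //= p t IH; rewrite map_cat IH; congr (_ ++ _).
by rewrite -map_comp; apply: eq_map => q /=; rewrite massoc.
Qed.
Lemma tmul2_r2 a (t x : tens2 A) :
  (r2 mul a).2 (tmul2 mul x t) = tmul2 mul x [seq (p.1, mul p.2 a) | p <- t].
Proof.
elim: x => //= q x IH; rewrite map_cat IH; congr (_ ++ _).
by rewrite -!map_comp; apply: eq_map => p /=; rewrite massoc.
Qed.
Lemma tmul2_rr a (t x : tens2 A) :
  tmul2 mul t ((r2 mul a).1 x) = tmul2 mul [seq (p.1, mul p.2 a) | p <- t] x.
Proof.
elim: t => [|p t IH] //; rewrite /tmul2 /= in IH *; rewrite IH; congr (_ ++ _).
by rewrite -map_comp; apply: eq_map => q /=; rewrite massoc.
Qed.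
Lemma tmul2_rl a (t x : tens2 A) :
  tmul2 mul ((r2 mul a).2 x) t = tmul2 mul x [seq (p.1, mul a p.2) | p <- t].
Proof.
elim: x => [|q x IH] //; rewrite /tmul2 /= in IH *; rewrite IH; congr (_ ++ _).
by rewrite -!map_comp; apply: eq_map => p /=; rewrite massoc.
Qed.

End Helpers.

Arguments lfun0 {K A}. Arguments lfunD {K A}. Arguments lfunZ {K A}. Arguments lfunB {K A}.
Arguments lfun_sum {K A}. Arguments lfun_sumo {K A}. Arguments repr {K A s}.
Arguments teq2_trans {K A}. Arguments teq2_sym {K A}.
Arguments mul0l {K A mul}. Arguments mul0r {K A mul}. Arguments mulZl {K A mul}.
Arguments mulZr {K A mul}. Arguments mulBl {K A mul}. Arguments mulBr {K A mul}.
Arguments lfun_mull {K A mul}. Arguments lfun_mulr {K A mul}.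
Arguments r2_teq1 {K A mul}. Arguments r2_teq2 {K A mul}.
Arguments tmul2_r1 {K A mul}. Arguments tmul2_r2 {K A mul}.
Arguments tmul2_rr {K A mul}. Arguments tmul2_rl {K A mul}.

Lemma r2e (K : fieldType) (A : lmodType K) (mul : A -> A -> A) e :
  (forall a, mul e a = a /\ mul a e = a) ->
  forall s, (r2 mul e).1 s = s /\ (r2 mul e).2 s = s /\ (l2 mul e).1 s = s /\ (l2 mul e).2 s = s.
Proof.
move=> He s; split; [|split; [|split]]; rewrite /= -[RHS]map_id;
  apply: eq_map => -[x y] /=; by rewrite ?(He x).1 ?(He x).2 ?(He y).1 ?(He y).2.
Qed.

Lemma main_gen (K : fieldType) (A : lmodType K) (mul : A -> A -> A)
    (D : A -> mult (tens2 A)) (eps : A -> K) :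
  AQH mul D eps ->
  (compact_type mul /\ discrete_type mul eps <-> finite_dim A).
Proof.
case=> [[massoc mL mR nd1 nd2] [Hmult Hlin Hregu Hcoass]
        [[epsl epsm] c2 c3 c4 c5] [phi [S [[phil [a0 Ha0] li3 li4] Hfa
        [Sbij Slin Santi Srel]]]]].
have phi_mul_lin1 : forall y, lfun (fun x => phi (mul x y)).
  by move=> y; exact: (lfun_mulr mL).
have phi_mul_lin2 : forall x, lfun (fun y => phi (mul x y)).
  by move=> x; exact: (lfun_mull mR).
split.
-
  case=> [[e He] [h [hnz Hh]]].
  have Hr := r2e _ _ _ _ He.
  have phih : phi h != 0.
    apply/eqP=> ph0; move/eqP: hnz; apply; apply: Hfa; right => b.
    by rewrite Hh (lfunZ _ _ _ phil) ph0 mulr0.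
  have Dt : forall a, exists t, forall x,
      teq2 ((D a).1 x) (tmul2 mul t x) /\ teq2 ((D a).2 x) (tmul2 mul x t).
    move=> a; case: (Hregu a e) => [[t Ht] _ _ _]; exists t => x.
    have := Ht x; cbn [fst snd mmul emb2].
    by case: (Hr x) => -> _; case: (Hr ((D a).2 x)) => _ [-> _].
  have [th Hth] := Dt h.
  exists [seq p.1 | p <- th] => y.
  have [Sinv SK SinvK] := Sbij.
  pose a := Sinv y.
  have [t' Ht'] := Dt a.
  pose t'' := [seq (p.1, mul p.2 h) | p <- t'].
  pose u := [seq (p.1, mul a p.2) | p <- th].
  have M1 : meq2 (mmul (D a) (r2 mul h)) (emb2 mul t'').
    move=> x; split; cbn [fst snd mmul emb2].
    + apply: teq2_trans; first exact: (Ht' _).1.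
      by rewrite (tmul2_rr massoc); move=> f g _ _.
    + apply: teq2_trans; first exact: (r2_teq2 mL _ _ _ (Ht' _).2).
      by rewrite (tmul2_r2 massoc); move=> f g _ _.
  have M2 : meq2 (mmul (r2 mul a) (D h)) (emb2 mul u).
    move=> x; split; cbn [fst snd mmul emb2].
    + apply: teq2_trans; first exact: (r2_teq1 mR _ _ _ (Hth _).1).
      by rewrite (tmul2_r1 massoc); move=> f g _ _.
    + apply: teq2_trans; first exact: (Hth _).2.
      by rewrite (tmul2_rl massoc); move=> f g _ _.
  have HS := Srel _ _ _ _ M1 M2.
  have Ha : sliceR eps t' = a.
    have -> : a = mul a e by rewrite (He a).2.
    apply: c4 => x; cbn [fst snd mmul emb2].
    by case: (Hr x) => _ [_ [-> _]]; case: (Hr ((D a).2 x)) => _ [_ [_ ->]]; exact: Ht'.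
  have H1 : sliceR phi t'' = phi h *: a.
    rewrite /sliceR big_map -Ha /sliceR scaler_sumr; apply: eq_bigr => p _ /=.
    by rewrite Hh (lfunZ _ _ _ phil) scalerA mulrC.
  have Sa : S (phi h *: a) = phi h *: S a.
    have S0 : S 0 = 0.
      have := Slin 1 0 0; rewrite scaler0 addr0 scale1r.
      by move/(congr1 (fun x => x - S 0)); rewrite addrK subrr.
    by rewrite -[_ *: a]addr0 Slin S0 addr0.
  rewrite H1 Sa /a SinvK in HS.
  have -> : y = (phi h)^-1 *: sliceR phi u by rewrite -HS scalerA mulVf // scale1r.
  rewrite /sliceR big_map scaler_sumr (big_nth (0, 0)) big_mkord size_map.
  exists (fun i => (phi h)^-1 * phi (mul a (nth (0, 0) th i).2)).
  apply: eq_bigr => i _ /=; rewrite scalerA (nth_map (0, 0)) //.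
-
  case=> s Hs.
  have [eR HeR] := repr Hs _ phi_mul_lin1 phi_mul_lin2
    (fun a Ha => Hfa a (or_introl Ha)) _ phil.
  have [eL HeL] := repr Hs (fun x y => phi (mul y x)) (fun y => phi_mul_lin2 y) (fun x => phi_mul_lin1 x)
    (fun a Ha => Hfa a (or_intror Ha)) _ phil.
  have unitL : forall a, mul eL a = a.
    move=> a; apply/eqP; rewrite -subr_eq0; apply/eqP; apply: Hfa; left => b.
    by rewrite (mulBl mL) (lfunB _ _ _ phil) -massoc HeL subrr.
  have unitR : forall a, mul a eR = a.
    move=> a; apply/eqP; rewrite -subr_eq0; apply/eqP; apply: Hfa; right => b.
    by rewrite (mulBr mR) (lfunB _ _ _ phil) massoc HeR subrr.
  have eLR : eL = eR by rewrite -[RHS]unitL unitR.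
  have He : forall a, mul eL a = a /\ mul a eL = a by move=> a; rewrite {2}eLR.
  split; first by exists eL.
  have [h Hh] := repr Hs _ phi_mul_lin1 phi_mul_lin2
    (fun a Ha => Hfa a (or_introl Ha)) _ epsl.
  exists h; split.
  + apply/eqP => h0; move/eqP: Ha0; apply.
    case: (Hregu a0 eL) => [[t0 Ht0] _ _ _].
    have := c2 _ _ _ Ht0; rewrite (He a0).2 => <-.
    rewrite /sliceL big1 ?(lfun0 _ phil) // => p _.
    by rewrite -Hh h0 (mul0r mR) (lfun0 _ phil) scale0r.
  + move=> a; apply/eqP; rewrite -subr_eq0; apply/eqP; apply: Hfa; right => b.
    rewrite (mulBr mR) (lfunB _ _ _ phil) massoc Hh (mulZr mR) (lfunZ _ _ _ phil).
    by rewrite Hh epsm mulrC subrr.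
Qed.

Theorem mainTheorem18 (R : realType) (A : lmodType R[i]) (mul : A -> A -> A)
    (D : A -> mult (tens2 A)) (eps : A -> R[i]) :
  AQH mul D eps ->
  (compact_type mul /\ discrete_type mul eps <-> finite_dim A).
Proof. exact: main_gen. Qed.
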